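(* Let $x \geq 1$ and $m \geq 2$ be integers. Let $\mathcal{C}_{m,x}$ be the set of binary words of length $m$ containing no pattern from $\mathcal{T}_x = \{0\mathbf{1}^y0,\ 1\mathbf{0}^y1 : 1\le y\le x\}$ as a contiguous substring, listed in increasing lexicographic order, with $g(\mathbf{c})$ the position (from $0$) of $\mathbf{c}$ in this list. Let $N(k,x) = |\mathcal{C}_{k,x}|$ for $k\ge1$ and $N(k,x)\triangleq 2$ for all integers $k\le 1$. Define the balanced index $g^{\mathrm{b}}(\mathbf{c})$ of $\mathbf{c}\in\mathcal{C}_{m,x}$ by $g^{\mathrm{b}}(\mathbf{c}) = g(\mathbf{c})$ if the leftmost bit of $\mathbf{c}$ is $0$, and $g^{\mathrm{b}}(\mathbf{c}) = N(m,x)-1-g(\mathbf{c})$ if the leftmost bit of $\mathbf{c}$ is $1$ (so that the codewords with indices $g$ and $N(m,x)-1-g$ share the same balanced index). Then for $\mathbf{c} = [c_{m-1}\,c_{m-2}\dots c_0] \in \mathcal{C}_{m,x}$ (with $c_{m-1}$ the leftmost bit): if $c_{m-1}=0$, $$g^{\mathrm{b}}(\mathbf{c}) = \frac12 \sum_{\substack{0\le i\le m-2\\ c_i=1}} N(i-x+1,x);$$ if $c_{m-1}=1$, $$g^{\mathrm{b}}(\mathbf{c}) = \frac12 \sum_{\substack{0\le i\le m-2\\ c_i=0}} N(i-x+1,x).$$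
   Context: $\mathbf{0}^r$ (resp. $\mathbf{1}^r$) denotes a run of $r$ consecutive $0$'s (resp. $1$'s). Lexicographic order on binary words of a fixed length is the order as binary numbers with the leftmost bit most significant. In the paper, a balanced LOCO code encodes each message by the pair of codewords with indices $g$ and $N(m,x)-1-g$ in $\mathcal{C}_{m,x}$, and $g^{\mathrm{b}}$ is the common index of this pair (equal to the index of the member beginning with $0$). *)

(* Defs.v *)
From mathcomp Require Import all_boot all_order all_algebra.
Set Implicit Arguments. Unset Strict Implicit. Unset Printing Implicit Defensive.
Import Order.TTheory GRing.Theory Num.Theory.

(* Binary words are seq bool, written leftmost bit first:
   c = [:: c_{m-1}; c_{m-2}; ...; c_0]. *)

Definition pat01 (y : nat) : seq bool := false :: rcons (nseq y true) false.
Definition pat10 (y : nat) : seq bool := true :: rcons (nseq y false) true.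

Definition has_forbidden (x : nat) (w : seq bool) : bool :=
  has (fun y => infix (pat01 y) w || infix (pat10 y) w) (iota 1 x).

Definition loco_code (m x : nat) : seq (seq bool) :=
  [seq tval t | t <- enum {: m.-tuple bool} & ~~ has_forbidden x (tval t)].

Definition bin_val (w : seq bool) : nat := foldl (fun acc (b : bool) => acc.*2 + b) 0 w.

(* g(c): position (from 0) of c in C_{m,x} listed in increasing lexicographic
   order = number of codewords strictly smaller than c. *)
Definition lex_index (m x : nat) (c : seq bool) : nat :=
  count (fun d => bin_val d < bin_val c) (loco_code m x).

Definition Nloco (k : int) (x : nat) : nat :=
  if (k <= 1)%R then 2 else size (loco_code `|k|%N x).

Definition bal_index (m x : nat) (c : seq bool) : nat :=
  if nth false c 0 then Nloco m%:Z x - 1 - lex_index m x c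
  else lex_index m x c.

(* bit c_i of c (c_{m-1} leftmost) *)
Definition bit (m : nat) (c : seq bool) (i : nat) : bool := nth false c (m - 1 - i).

(* Main.v *)
Require Import Defs.
From mathcomp Require Import all_boot all_order all_algebra zify.
Import Order.TTheory GRing.Theory Num.Theory.

Fixpoint allw (n : nat) : seq (seq bool) :=
  if n is n'.+1 then map (cons false) (allw n') ++ map (cons true) (allw n')
  else [:: [::]].

Lemma count_allwS (P : pred (seq bool)) n :
  count P (allw n.+1) = count (fun d => P (false :: d)) (allw n) + count (fun d => P (true :: d)) (allw n).
Proof. by rewrite /= count_cat !count_map. Qed.

Lemma mem_allw n d : (d \in allw n) = (size d == n).
Proof.
elim: n d => [|n IH] [|b d] //=; rewrite mem_cat.
- by apply/orP => -[] /mapP [].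
- case: b; apply/orP/idP.
  + by case=> /mapP [e]; rewrite IH => He [] //= ->.
  + by rewrite eqSS -IH => H; right; apply/mapP; exists d.
  + by case=> /mapP [e]; rewrite IH => He [] //= ->.
  + by rewrite eqSS -IH => H; left; apply/mapP; exists d.
Qed.

Lemma uniq_allw n : uniq (allw n).
Proof.
elim: n => [|n IH] //=; rewrite cat_uniq !map_inj_uniq //; try by move=> ? ? [].
rewrite IH /= andbT; apply/hasPn => d /mapP [e _ ->]; apply/mapP => -[f _] [] //.
Qed.

Lemma mem_W m w : (w \in map val (enum {: m.-tuple bool})) = (size w == m).
Proof.
apply/mapP/idP => [[t _ ->]|H]; first by rewrite size_tuple.
by exists (Tuple H); rewrite ?mem_enum.
Qed.

Lemma perm_W m : perm_eq (map val (enum {: m.-tuple bool})) (allw m).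
Proof.
apply: uniq_perm; first by rewrite map_inj_uniq ?enum_uniq //; apply: val_inj.
  exact: uniq_allw.
by move=> w; rewrite mem_W mem_allw.
Qed.

Lemma loco_codeE m x : loco_code m x =
  filter (fun d => ~~ has_forbidden x d) (map val (enum {: m.-tuple bool})).
Proof. by rewrite filter_map. Qed.

Lemma count_loco m x (P : pred (seq bool)) :
  count P (loco_code m x) = count (fun d => ~~ has_forbidden x d && P d) (allw m).
Proof.
rewrite loco_codeE count_filter.
have /permP H := perm_W m; rewrite H; apply: eq_count => d /=; apply: andbC.
Qed.

Lemma mem_loco m x c : (c \in loco_code m x) = (size c == m) && ~~ has_forbidden x c.
Proof. by rewrite loco_codeE mem_filter mem_W andbC. Qed.

Lemma bvA a s : foldl (fun acc (b : bool) => acc.*2 + b) a s = a * 2 ^ size s + bin_val s.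
Proof.
rewrite /bin_val; elim: s a => [|b s IH] a /=; first by rewrite expn0 muln1 addn0.
rewrite IH (IH (0.*2 + b)) expnS; lia.
Qed.

Lemma bv_cons b s : bin_val (b :: s) = b * 2 ^ size s + bin_val s.
Proof. by rewrite {1}/bin_val /= bvA. Qed.

Lemma bv_lt s : bin_val s < 2 ^ size s.
Proof.
elim: s => [|b s IH] //; rewrite bv_cons /= expnS; case: b => /=; lia.
Qed.

Lemma bv_ltE a b d c : size d = size c ->
  (bin_val (a :: d) < bin_val (b :: c)) = (a < b) || ((a == b) && (bin_val d < bin_val c)).
Proof.
move=> Hs; rewrite !bv_cons Hs; have := bv_lt d; have := bv_lt c; rewrite Hs.
by case: a; case: b => /=; lia.
Qed.

Lemma bv_eqE d c : size d = size c -> (bin_val d == bin_val c) = (d == c).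
Proof.
elim: d c => [|a d IH] [|b c] //= [Hs]; rewrite !bv_cons Hs.
have := bv_lt d; have := bv_lt c; rewrite Hs eqseq_cons -(IH c Hs) => H1 H2.
by case: a; case: b => /=; [apply/eqP/eqP; lia | apply/negbTE/eqP; lia | apply/negbTE/eqP; lia | apply/eqP/eqP; lia].
Qed.

Lemma bv_neg d : bin_val (map negb d) + bin_val d = (2 ^ size d).-1.
Proof.
elim: d => [|a d IH] //; rewrite /= !bv_cons size_map expnS.
have := expn_gt0 2 (size d); case: a => /=; lia.
Qed.

Definition valid x w := ~~ has_forbidden x w.
Definition rl (R : seq bool) := if R is a :: s then (find (fun z => z != a) s).+1 else 0.
Definition dR x R := if rl R < size R then x.+1 - rl R else 0.
Definition ok x R (b : bool) := if R is a :: _ then (b == a) || (dR x R == 0) else true.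

Lemma prefix_nseq (a b : bool) s y : b != a ->
  prefix (nseq y a ++ [:: b]) s = (find (fun z => z != a) s == y) && (y < size s).
Proof.
move=> ba; elim: y s => [|y IH] [|z s] //=.
- by rewrite prefix0s andbT; case: z; case: a b ba => [] [].
- rewrite IH ltnS; case: (z =P a) => [->|/eqP za]; first by rewrite eqxx.
  by move: za ba IH; case: z; case: a.
Qed.

Lemma sfx y p (b : bool) :
  suffix (pat01 y) (rcons p b) || suffix (pat10 y) (rcons p b) =
  prefix (nseq y (~~ b) ++ [:: b]) (rev p).
Proof.
rewrite /pat01 /pat10 -!rcons_cons !suffix_rcons /suffix !rev_cons rev_nseq !cats1.
by rewrite rev_nseq; case: b => /=; rewrite ?orbF.
Qed.

Lemma hf_rcons x p b :
  has_forbidden x (rcons p b) = has_forbidden x p || ~~ ok x (rev p) b.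
Proof.
rewrite /has_forbidden.
rewrite (eq_has (a2 := predU (fun y => infix (pat01 y) p || infix (pat10 y) p)
    (fun y => prefix (nseq y (~~ b) ++ [:: b]) (rev p)))); last first.
  by move=> y /=; rewrite !infix_rconsl -sfx; case: (suffix _ _); case: (suffix _ _);
     case: (infix _ _); case: (infix _ _).
rewrite has_predU; congr (_ || _).
rewrite (eq_has (a2 := fun y => (find (fun z => z != ~~ b) (rev p) == y) && (y < size (rev p))));
  last by move=> y /=; rewrite prefix_nseq //; case: b.
move: (rev p) => R.
have -> : has (fun y => (find (fun z => z != ~~ b) R == y) && (y < size R)) (iota 1 x)
   = (0 < find (fun z => z != ~~ b) R <= x) && (find (fun z => z != ~~ b) R < size R).
  apply/hasP/idP => [[y]|/andP [H1 H2]].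
    by rewrite mem_iota => /andP [H1 H2] /andP [/eqP -> H3]; rewrite H3 andbT; lia.
  by exists (find (fun z => z != ~~ b) R); rewrite ?mem_iota ?eqxx ?H2 //; lia.
case: R => [|a s] //=.
case: (a =P b) => [->|/eqP ab]; first by rewrite eqxx; case: b.
have -> : (a != ~~ b) = false by case: a b ab => [] [].
have -> : (b == a) = false by case: a b ab => [] [].
have -> : (fun z => z != ~~ b) = (fun z => z != a) by case: a b ab => [] [].
rewrite /dR /= ltnS; case: ifP => H; rewrite ?andbT ?andbF /=; lia.
Qed.

Lemma dR_same x a s : dR x (a :: a :: s) = (dR x (a :: s)).-1.
Proof. rewrite /dR /= eqxx /=; case: ifP; case: ifP; lia. Qed.

Lemma dR_diff x a b s : b != a -> dR x (b :: a :: s) = x.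
Proof. by rewrite /dR /= eq_sym => ->; rewrite subSS subn0. Qed.

Lemma dR_single x a : dR x [:: a] = 0.
Proof. by []. Qed.

Lemma valid_rcons x p b : valid x (rcons p b) = valid x p && ok x (rev p) b.
Proof. by rewrite /valid hf_rcons negb_or negbK. Qed.

Lemma valid_cat x p d : valid x (p ++ d) -> valid x p.
Proof.
elim: d p => [|b d IH] p; first by rewrite cats0.
by rewrite -cat_rcons => /IH; rewrite valid_rcons => /andP [].
Qed.

Lemma valid_nil x : valid x [::].
Proof. by rewrite /valid /has_forbidden; apply/hasPn => y _. Qed.

Definition Eb x R n := count (fun d => valid x (rev R ++ d)) (allw n).

Lemma Eb_S x R n : Eb x R n.+1 = Eb x (false :: R) n + Eb x (true :: R) n.
Proof. by rewrite /Eb count_allwS; congr (_ + _); apply: eq_count => d; rewrite rev_cons cat_rcons. Qed.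

Lemma Eb_inv x R n : ~~ valid x (rev R) -> Eb x R n = 0.
Proof.
move=> H; rewrite /Eb (eq_count (a2 := pred0)) ?count_pred0 // => d /=.
by apply/negbTE; apply: contra H; apply: valid_cat.
Qed.

Fixpoint Gf x f k := if f is f'.+1 then (if k <= 1 then 1 else Gf x f' k.-1 + Gf x f' (k.-1 - x)) else 1.
Definition G x k := Gf x k k.

Lemma Gf_stable x f1 f2 k : k <= f1 -> k <= f2 -> Gf x f1 k = Gf x f2 k.
Proof.
elim: f1 f2 k => [|f1 IH] [|f2] k //=.
- by move=> H1 H2; have -> : k = 0 by lia.
- by move=> H1 H2; have -> : k = 0 by lia.
- move=> H1 H2; case: ifP => // Hk.
  by rewrite (IH f2) ?(IH f2 (k.-1 - x)) //; lia.
Qed.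

Lemma G_small x k : k <= 1 -> G x k = 1.
Proof. by case: k => [|[|]]. Qed.

Lemma G_rec x k : G x k.+2 = G x k.+1 + G x (k.+1 - x).
Proof.
rewrite /G (_ : Gf x k.+2 k.+2 = Gf x k.+1 k.+1 + Gf x k.+1 (k.+1 - x)) //.
by rewrite (Gf_stable x k.+1 (k.+1 - x) (k.+1 - x)) //; lia.
Qed.

Lemma G_K x n : 0 < x ->
  G x n.+1 = G x (n.+1 - x) + \sum_(n - x <= i < n) G x (i.+1 - x).
Proof.
move=> x0; elim: n => [|n IH]; first by rewrite big_geq // !G_small //; lia.
rewrite G_rec IH big_nat_recr /=; last by lia.
case: (leqP x n) => Hxn.
- rewrite (big_ltn_cond (m := n - x)) /=; last by lia.
  have -> : (n - x).+1 = n.+1 - x by lia.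
  have -> : G x (n.+2 - x) = G x (n.+1 - x) + G x (n.+1 - x - x).
    rewrite (_ : n.+2 - x = (n - x).+2) ?G_rec; last by lia.
    by congr (G x _ + G x _); lia.
  lia.
- have -> : n.+1 - x = n - x by lia.
  rewrite (@G_small x (n - x)) ?(@G_small x (n.+2 - x)); lia.
Qed.

Lemma Eb_0 x R : Eb x R 0 = valid x (rev R).
Proof. by rewrite /Eb /= cats0 addn0. Qed.

Lemma Eb_Sa x a R n : Eb x R n.+1 = Eb x (a :: R) n + Eb x (~~ a :: R) n.
Proof. by rewrite Eb_S; case: a => //=; rewrite addnC. Qed.

Lemma valid_cons x a R : valid x (rev (a :: R)) = valid x (rev R) && ok x R a.
Proof. by rewrite rev_cons valid_rcons revK. Qed.

Lemma Eb_closed x n R : R != [::] -> valid x (rev R) -> Eb x R n = G x (n.+1 - dR x R).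
Proof.
elim: n R => [|n IH] [|a s] // _ Hv.
  by rewrite Eb_0 Hv G_small //; lia.
rewrite (Eb_Sa x a) IH //; last by rewrite valid_cons Hv /= eqxx.
rewrite dR_same.
case: (posnP (dR x (a :: s))) => HD.
- rewrite IH //; last by rewrite valid_cons Hv /= HD eqxx orbT.
  rewrite dR_diff; last by case: (a).
  by rewrite HD subn0 -G_rec.
- rewrite Eb_inv; last by rewrite valid_cons Hv /= (gtn_eqF HD); case: (a).
  by rewrite addn0; have -> : n.+1 - (dR x (a :: s)).-1 = n.+2 - dR x (a :: s) by lia.
Qed.

Lemma Eb_nil x k : Eb x [::] k.+1 = 2 * G x k.+1.
Proof.
have Hv : forall a, valid x (rev [:: a]).
  by move=> a; rewrite valid_cons valid_nil.
by rewrite Eb_S !Eb_closed // !dR_single subn0; lia.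
Qed.

Lemma size_loco x k : size (loco_code k x) = Eb x [::] k.
Proof.
rewrite -(count_predT) count_loco /Eb; apply: eq_count => d /=.
by rewrite andbT.
Qed.

Definition Lb x R c :=
  count (fun d => (bin_val d < bin_val c) && valid x (rev R ++ d)) (allw (size c)).

Lemma Lb_nil x R : Lb x R [::] = 0.
Proof. by []. Qed.

Lemma Lb_cons x R (b : bool) c :
  Lb x R (b :: c) = (if b then Eb x (false :: R) (size c) else 0) + Lb x (b :: R) c.
Proof.
rewrite /Lb /= count_allwS /Eb.
rewrite (eq_in_count (a1 := fun d => (bin_val (false :: d) < bin_val (b :: c)) && valid x (rev R ++ false :: d))
   (a2 := fun d => (b || (bin_val d < bin_val c)) && valid x (rev (false :: R) ++ d))); last first.
  by move=> d; rewrite mem_allw => /eqP Hd /=; rewrite bv_ltE // rev_cons cat_rcons; case: b.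
rewrite (eq_in_count (a1 := fun d => (bin_val (true :: d) < bin_val (b :: c)) && valid x (rev R ++ true :: d))
   (a2 := fun d => (b && (bin_val d < bin_val c)) && valid x (rev (true :: R) ++ d))); last first.
  by move=> d; rewrite mem_allw => /eqP Hd /=; rewrite bv_ltE // rev_cons cat_rcons; case: b.
case: b => /=.
- by congr (_ + _); apply: eq_count => d; rewrite andbT.
- by rewrite count_pred0 addn0.
Qed.

Definition owed x R n :=
  if R is a :: _ then (if a && (0 < dR x R) then \sum_(n - dR x R <= i < n) G x (i.+1 - x) else 0)
  else 0.

Fixpoint T x s := if s is b :: s' then (if b then G x ((size s').+1 - x) else 0) + T x s' else 0.

Lemma invariant x c : 0 < x -> forall R, R != [::] -> valid x (rev R ++ c) ->
  Lb x R c + owed x R (size c) = T x c.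
Proof.
move=> x0; elim: c => [|b c IH] [|a s] // _ Hv.
  by rewrite Lb_nil /owed /=; case: ifP => // _; rewrite big_geq.
have Hv' : valid x (rev (b :: a :: s) ++ c) by rewrite rev_cons cat_rcons.
have := valid_cat _ _ _ Hv'; rewrite valid_cons => /andP [Hv0 Hok].
have {}IH := IH (b :: a :: s) isT Hv'.
rewrite Lb_cons /=; move: Hok IH; rewrite /ok.
case: a Hv Hv0 Hv' => [] Hv Hv0 Hv' /=; case: b Hv Hv' => /= Hv Hv' Hok IH.
- rewrite dR_same in IH; move: IH Hv0; set D := dR x (true :: s) => IH Hv0.
  case: (posnP D) => HD.
  + rewrite HD /= addn0 in IH *.
    rewrite Eb_closed //; last by rewrite valid_cons Hv0 /ok -/D HD eqxx orbT.
    rewrite dR_diff // -IH; lia.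
  + rewrite Eb_inv; last by rewrite valid_cons Hv0 /ok -/D /= (gtn_eqF HD).
    rewrite add0n -IH big_nat_recr /=; last by lia.
    have -> : size c - D.-1 = (size c).+1 - D by lia.
    case: posnP => HD1 /=; first by rewrite big_geq; lia.
    lia.
- by rewrite (eqP Hok) /= !add0n -IH.
- move: Hok => /eqP HD.
  rewrite Eb_closed //; last by rewrite valid_cons Hv0 /ok eqxx.
  rewrite dR_same HD /= subn0 -IH dR_diff // x0 /= (G_K x (size c) x0).
  by rewrite addn0 -addnA [\sum_(_ <= _ < _) _ + _]addnC.
- by rewrite /= !add0n.
Qed.

Lemma lex_L x m c : size c = m -> lex_index m x c = Lb x [::] c.
Proof.
move=> <-; rewrite /lex_index count_loco /Lb; apply: eq_count => d /=.
by rewrite andbC.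
Qed.

Lemma case0 x c' : 0 < x -> valid x (false :: c') ->
  lex_index (size c').+1 x (false :: c') = T x c'.
Proof.
move=> x0 Hv; rewrite lex_L // Lb_cons add0n.
by rewrite -(invariant x c' x0 [:: false]) //= addn0.
Qed.

Lemma Tsum x s : T x s = \sum_(0 <= i < size s | nth false s (size s - 1 - i)) G x (i.+1 - x).
Proof.
elim: s => [|b s IH]; first by rewrite big_geq.
rewrite /= IH big_mkcond /= [in RHS]big_mkcond big_nat_recr //=.
rewrite (_ : (size s).+1 - 1 - size s = 0) 1?addnC; last by lia.
congr (_ + _).
apply: eq_big_nat => i /andP [_ Hi].
by rewrite (_ : (size s).+1 - 1 - i = (size s - 1 - i).+1) //; lia.
Qed.

Lemma Nloco_G x i : 0 < x -> Nloco (i%:Z - x%:Z + 1)%R x = 2 * G x (i.+1 - x).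
Proof.
move=> x0; rewrite /Nloco; case: ifP => H.
  by rewrite G_small //; lia.
rewrite size_loco (_ : `|(i%:Z - x%:Z + 1)%R|%N = (i - x).+1); last by lia.
by rewrite Eb_nil; congr (2 * G x _); lia.
Qed.

Lemma ok_neg x R b : ok x (map negb R) (~~ b) = ok x R b.
Proof.
case: R => [|a s] //=.
have -> : dR x (~~ a :: map negb s) = dR x (a :: s).
  rewrite /dR /rl /= size_map find_map.
  by rewrite (@eq_find _ _ (fun z => z != a)) // => z /=; case: z; case: (a).
by case: a; case: b.
Qed.

Lemma valid_neg x d : valid x (map negb d) = valid x d.
Proof.
elim/last_ind: d => [|p b IH] //.
by rewrite map_rcons !valid_rcons IH -map_rev ok_neg.
Qed.

Lemma count_neg m (P : pred (seq bool)) :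
  count P (allw m) = count (fun d => P (map negb d)) (allw m).
Proof.
have inj : injective (map negb) by apply: (can_inj (g := map negb)) => d; rewrite mapK //; case.
have Hp : perm_eq (allw m) (map (map negb) (allw m)).
  apply: uniq_perm; first exact: uniq_allw.
    by rewrite map_inj_uniq ?uniq_allw.
  move=> d; rewrite -{2}(mapK (f := negb) (g := negb) _ d); last by case.
  by rewrite mem_map // !mem_allw size_map.
by rewrite (permP Hp) count_map.
Qed.

Lemma count_split (T0 : Type) (P q : pred T0) s :
  count P s = count (fun d => P d && q d) s + count (fun d => P d && ~~ q d) s.
Proof. by elim: s => //= y s ->; case: (P y); case: (q y) => /=; lia. Qed.

Lemma complement x m c : size c = m -> valid x c ->
  lex_index m x c + 1 + lex_index m x (map negb c) = size (loco_code m x).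
Proof.
move=> Hs Hv.
rewrite size_loco /Eb !lex_L ?size_map // /Lb size_map Hs.
rewrite (@eq_count _ (fun d => valid x (rev [::] ++ d)) (valid x)) //.
rewrite (count_split _ (valid x) (fun d => bin_val d < bin_val c)).
rewrite (count_split _ (fun d => valid x d && ~~ (bin_val d < bin_val c)) (fun d => bin_val d == bin_val c)).
have -> : count (fun d => (valid x d && ~~ (bin_val d < bin_val c)) && (bin_val d == bin_val c)) (allw m) = 1.
  have := count_uniq_mem c (uniq_allw m); rewrite mem_allw Hs eqxx /= => <-.
  apply: eq_in_count => d; rewrite mem_allw => /eqP Hd.
  rewrite bv_eqE; last by rewrite Hd.
  case: (d =P c) => [->|/eqP H]; rewrite ?andbF ?Hv ?ltnn ?eqxx /=; first by rewrite eqxx.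
  by rewrite (negbTE H).
rewrite (count_neg m (fun d => (bin_val d < bin_val (map negb c)) && valid x (rev [::] ++ d))).
rewrite -addnA; congr (_ + (_ + _)); apply: eq_in_count => d; rewrite mem_allw => /eqP Hd /=.
- by rewrite andbC.
- rewrite valid_neg andbC -andbA; congr (_ && _).
  have := bv_neg d; have := bv_neg c; have := bv_lt d; have := bv_lt c.
  rewrite Hd Hs => h1 h2 h3 h4.
  case: (ltngtP (bin_val d) (bin_val c)) => H /=.
  + apply/negbTE; lia.
  + apply/idP; lia.
  + apply/negbTE; lia.
Qed.

Lemma sum_bit (b : bool) c' (F : nat -> nat) :
  \sum_(0 <= i < (size c').+1 - 1 | bit (size c').+1 (b :: c') i) F i =
  \sum_(0 <= i < size c' | nth false c' (size c' - 1 - i)) F i.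
Proof.
rewrite subn1 /= big_mkcond [in RHS]big_mkcond /=.
apply: eq_big_nat => i /andP [_ Hi].
by rewrite /bit (_ : (size c').+1 - 1 - i = (size c' - 1 - i).+1) //; lia.
Qed.

Lemma sum_G x s : 0 < x ->
  2 * \sum_(0 <= i < size s | nth false s (size s - 1 - i)) G x (i.+1 - x) =
  \sum_(0 <= i < size s | nth false s (size s - 1 - i)) Nloco (i%:Z - x%:Z + 1)%R x.
Proof.
move=> x0; rewrite big_distrr /=; apply: eq_bigr => i _.
by rewrite Nloco_G.
Qed.

Theorem theorem3 (x m : nat) (c : seq bool) :
  1 <= x -> 2 <= m -> c \in loco_code m x ->
  (bit m c (m - 1) = false ->
     2 * bal_index m x c =
     \sum_(0 <= i < m - 1 | bit m c i) Nloco (i%:Z - x%:Z + 1)%R x) /\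
  (bit m c (m - 1) = true ->
     2 * bal_index m x c =
     \sum_(0 <= i < m - 1 | ~~ bit m c i) Nloco (i%:Z - x%:Z + 1)%R x).
Proof.
move=> x1 m2; rewrite mem_loco => /andP [/eqP Hs Hv].
case: c Hs Hv => [|b c'] Hs Hv; first by rewrite -Hs in m2.
rewrite -Hs /= in m2 *.
have Hbit : bit (size c').+1 (b :: c') ((size c').+1 - 1) = b.
  by rewrite /bit subn1 /= subnn.
rewrite Hbit /bal_index /=.
clear Hs; case: b Hv Hbit => Hv Hbit; split=> // _.
- have Hv' : valid x (false :: map negb c') by rewrite -[false :: _]/(map negb (true :: c')) valid_neg.
  have Hc := complement x (size c').+1 (true :: c') erefl Hv.
  have -> : Nloco (size c').+1 x = size (loco_code (size c').+1 x).
    by rewrite /Nloco ifF //; apply/negbTE; rewrite -ltNge; lia.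
  rewrite /= in Hc *.
  have -> : size (loco_code (size c').+1 x) - 1 - lex_index (size c').+1 x (true :: c')
      = lex_index (size c').+1 x (false :: map negb c') by lia.
  rewrite -{1}(size_map negb c') case0 // Tsum sum_G //.
  rewrite big_mkcond [in RHS]big_mkcond /= size_map.
  rewrite (_ : (size c').+1 - 1 = size c'); last by lia.
  apply: eq_big_nat => i /andP [_ Hi].
  rewrite (nth_map false); last by lia.
  by rewrite /bit (_ : (size c').+1 - 1 - i = (size c' - 1 - i).+1) //; lia.
- by rewrite case0 // Tsum sum_G // sum_bit.
Qed.
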